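(* Let $m_1,m_2,m_3\ge 1$ be integers and let $a\neq b$ be complex numbers. (a) If $T_{m_1}(a)=T_{m_1}(b)$ and $T_{m_2}(a)=T_{m_2}(b)$, then either $T_l(a)=T_l(b)$ for $l=\gcd(m_1,m_2)$, or $T_{m_1m_2}'(a)=T_{m_1m_2}'(b)=0$. (b) If $T_{m_j}(a)=T_{m_j}(b)$ for $j=1,2,3$, then there exist distinct indices $i_1,i_2\in\{1,2,3\}$ such that $T_l(a)=T_l(b)$ for $l=\gcd(m_{i_1},m_{i_2})$.
   Context: $T_n$ denotes the Chebyshev polynomial of the first kind of degree $n$, defined by $T_n(\cos\phi)=\cos(n\phi)$. *)

(* Defs.v *)
From HB Require Import structures.
From mathcomp Require Import all_boot all_order all_algebra.
Set Implicit Arguments. Unset Strict Implicit. Unset Printing Implicit Defensive.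
Import Order.TTheory GRing.Theory Num.Theory.
Local Open Scope ring_scope.

(* Chebyshev polynomials of the first kind, via the standard recurrence
   T_0 = 1, T_1 = X, T_(n+2) = 2 X T_(n+1) - T_n
   (the unique polynomials with T_n(cos phi) = cos(n phi)). *)
Fixpoint cheb_pair (R : nzRingType) (n : nat) : {poly R} * {poly R} :=
  match n with
  | 0 => (1, 'X)
  | n'.+1 => let: (p, q) := cheb_pair R n' in (q, 'X *+ 2 * q - p)
  end.

Definition chebT (R : nzRingType) (n : nat) : {poly R} := (cheb_pair R n).1.

(* Main.v *)
Require Import Defs.
From HB Require Import structures.
From mathcomp Require Import all_boot all_order all_algebra.
From mathcomp Require Import ring lra.
Import Order.TTheory GRing.Theory Num.Theory.
Local Open Scope ring_scope.

Lemma chebT0 (R : nzRingType) : chebT R 0 = 1. Proof. by []. Qed.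
Lemma chebT1 (R : nzRingType) : chebT R 1 = 'X. Proof. by []. Qed.
Lemma chebT_pair (R : nzRingType) n : chebT R n.+1 = (cheb_pair R n).2.
Proof. by rewrite /chebT /=; case: (cheb_pair R n). Qed.
Lemma chebTSS (R : nzRingType) n :
  chebT R n.+2 = 'X *+ 2 * chebT R n.+1 - chebT R n.
Proof. rewrite chebT_pair /= chebT_pair /chebT; by case: (cheb_pair R n). Qed.

Lemma expr_gcd (F : fieldType) (x : F) m n :
  x ^+ m = 1 -> x ^+ n = 1 -> x ^+ (gcdn m n) = 1.
Proof.
elim: m {-2}m (leqnn m) n => [|k IH] m hm n hxm hxn.
  by move: hm; rewrite leqn0 => /eqP ->; rewrite gcd0n.
case: m hm hxm => [|m] hm hxm; first by rewrite gcd0n.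
rewrite gcdnC -gcdn_modl; apply: IH => //; last by rewrite expr_mod.
by rewrite -ltnS; exact: leq_trans (ltn_pmod _ _) hm.
Qed.

Section S.
Variable C : numClosedFieldType.

Lemma cheb_eval (u : C) : u != 0 -> forall n,
  (chebT C n).[(u + u^-1)/2] = (u ^+ n + u^-1 ^+ n) / 2.
Proof.
move=> hu.
suff H : forall n, (chebT C n).[(u + u^-1)/2] = (u ^+ n + u^-1 ^+ n) / 2 /\
   (chebT C n.+1).[(u + u^-1)/2] = (u ^+ n.+1 + u^-1 ^+ n.+1) / 2 by move=> n; case: (H n).
elim=> [|n [IH1 IH2]]; first by rewrite chebT0 chebT1 !hornerE /=; split => //; field.
split => //; rewrite chebTSS !hornerE IH1 IH2.
rewrite !exprS; set p := u ^+ n; set q := u^-1 ^+ n. field; done.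
Qed.

Lemma cheb_deriv (u : C) : u != 0 -> forall n,
  (chebT C n)^`().[(u + u^-1)/2] * (u - u^-1) = n%:R * (u ^+ n - u^-1 ^+ n).
Proof.
move=> hu.
suff H : forall n, (chebT C n)^`().[(u + u^-1)/2] * (u - u^-1) = n%:R * (u ^+ n - u^-1 ^+ n) /\
   (chebT C n.+1)^`().[(u + u^-1)/2] * (u - u^-1) = n.+1%:R * (u ^+ n.+1 - u^-1 ^+ n.+1) by move=> n; case: (H n).
elim=> [|n [IH1 IH2]].
  rewrite chebT0 chebT1 derivC derivX !hornerE /=; by split.
split => //; rewrite chebTSS !derivE !hornerE.
set D0 := (chebT C n)^`().[_]; set D1 := (chebT C n.+1)^`().[_].
set w := u - u^-1; set a := (u + u^-1) / 2.
have -> : ((1 + 1) * (chebT C n.+1).[a] + (a + a) * D1 - D0) * w =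
  (1 + 1) * (chebT C n.+1).[a] * w + (a + a) * (D1 * w) - D0 * w by ring.
rewrite IH1 IH2 /a (cheb_eval u hu) /w.
rewrite !mulrS !exprS; set p := u ^+ n; set q := u^-1 ^+ n; set N := 1 *+ n. field; done.
Qed.

Lemma param (a : C) : exists2 u : C, u != 0 & a = (u + u^-1) / 2.
Proof.
have hs := sqrtCK (a ^+ 2 - 1).
set s := sqrtC _ in hs.
have hu2 : (a + s) * (2 * a - (a + s)) = 1.
  have -> : (a + s) * (2 * a - (a + s)) = a ^+ 2 - s ^+ 2 by ring.
  by rewrite hs; ring.
have hu : a + s != 0.
  by apply/eqP => h; move: hu2; rewrite h mul0r => /eqP; rewrite eq_sym oner_eq0.
exists (a + s) => //.
have -> : (a + s)^-1 = 2 * a - (a + s).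
  by apply: (mulfI hu); rewrite mulfV // hu2.
have h2 : (2 : C) != 0 by rewrite pnatr_eq0.
by field.
Qed.

Lemma eq_cond (u v : C) m : u != 0 -> v != 0 ->
  (chebT C m).[(u + u^-1)/2] = (chebT C m).[(v + v^-1)/2] <->
  (u / v) ^+ m = 1 \/ (u * v) ^+ m = 1.
Proof.
move=> hu hv; rewrite !cheb_eval // !exprMn !exprVn.
have hp : u ^+ m != 0 by rewrite expf_neq0.
have hq : v ^+ m != 0 by rewrite expf_neq0.
move: hp hq; set p := u ^+ m; set q := v ^+ m => hp hq.
have h2 : (2 : C) != 0 by rewrite pnatr_eq0.
split.
  move=> H.
  have : (p - q) * (p * q - 1) == 0.
    have -> : (p - q) * (p * q - 1) = p * q * ((p + p^-1)/2 - (q + q^-1)/2) * 2.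
      by field; rewrite hp hq.
    by rewrite H subrr mulr0 mul0r.
  rewrite mulf_eq0 !subr_eq0 => /orP [/eqP ->|/eqP ->]; last by right.
  by left; rewrite mulfV.
case=> H.
  have -> : p = q by rewrite -[p](divfK hq) H mul1r.
  by [].
have hp' : p^-1 = q by apply: (mulfI hp); rewrite mulfV // H.
have hq' : q^-1 = p by apply: (mulfI hq); rewrite mulfV // mulrC H.
by rewrite hp' hq' addrC.
Qed.

Lemma deriv0 (u : C) N : u != 0 -> u ^+ 2 != 1 -> (u ^+ 2) ^+ N = 1 ->
  (chebT C N)^`().[(u + u^-1)/2] = 0.
Proof.
move=> hu hu2 hN.
have := cheb_deriv u hu N.
have hp : u ^+ N != 0 by rewrite expf_neq0.
have e : u^-1 ^+ N = u ^+ N.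
  rewrite exprVn; apply: (mulfI hp); rewrite mulfV //.
  by rewrite -expr2 -exprM mulnC exprM hN.
rewrite e subrr mulr0 => /eqP; rewrite mulf_eq0 => /orP [/eqP //|].
rewrite subr_eq0 => /eqP h; exfalso; move/eqP: hu2; apply.
by rewrite expr2 {2}h mulfV.
Qed.

Lemma mixed (u v : C) m1 m2 : u != 0 -> v != 0 ->
  (u / v) ^+ m1 = 1 -> (u * v) ^+ m2 = 1 ->
  ((u / v) ^+ gcdn m1 m2 = 1 \/ (u * v) ^+ gcdn m1 m2 = 1) \/
  ((chebT C (m1 * m2))^`().[(u + u^-1)/2] = 0 /\
   (chebT C (m1 * m2))^`().[(v + v^-1)/2] = 0).
Proof.
move=> hu hv hx hy.
have hx0 : u / v != 0 by rewrite mulf_neq0 ?invr_eq0.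
have exy : u ^+ 2 = (u / v) * (u * v) by field; rewrite ?hu ?hv.
have eyx : v ^+ 2 = (u * v) / (u / v) by field; rewrite hu hv.
have hxN : (u / v) ^+ (m1 * m2) = 1 by rewrite exprM hx expr1n.
have hyN : (u * v) ^+ (m1 * m2) = 1 by rewrite mulnC exprM hy expr1n.
have [/eqP hu2|hu2] := boolP (u ^+ 2 == 1).
  left; right; apply: expr_gcd => //.
  have -> : u * v = (u / v)^-1 by apply: (mulfI hx0); rewrite mulfV // -exy.
  by rewrite exprVn hx invr1.
have [/eqP hv2|hv2] := boolP (v ^+ 2 == 1).
  left; left; apply: expr_gcd => //.
  have -> : u / v = u * v.
    have hvi : v^-1 = v by apply: (mulfI hv); rewrite mulfV // -expr2 hv2.
    by rewrite hvi.
  by [].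
right; split; apply: deriv0 => //.
  by rewrite exy exprMn hxN hyN mulr1.
by rewrite eyx exprMn exprVn hxN hyN invr1 mulr1.
Qed.
End S.

Theorem lemma2p1 (C : numClosedFieldType) (m1 m2 m3 : nat) (a b : C)
  (hm1 : (0 < m1)%N) (hm2 : (0 < m2)%N) (hm3 : (0 < m3)%N) (hab : a != b) :
  ((chebT C m1).[a] = (chebT C m1).[b] ->
   (chebT C m2).[a] = (chebT C m2).[b] ->
   (chebT C (gcdn m1 m2)).[a] = (chebT C (gcdn m1 m2)).[b]
   \/ ((chebT C (m1 * m2))^`().[a] = 0 /\ (chebT C (m1 * m2))^`().[b] = 0))
  /\
  ((chebT C m1).[a] = (chebT C m1).[b] ->
   (chebT C m2).[a] = (chebT C m2).[b] ->
   (chebT C m3).[a] = (chebT C m3).[b] ->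
   exists i1 i2 : 'I_3, i1 != i2 /\
     let l := gcdn (nth 0%N [:: m1; m2; m3] i1) (nth 0%N [:: m1; m2; m3] i2) in
     (chebT C l).[a] = (chebT C l).[b]).
Proof.
have [u hu ->] := @param C a.
have [v hv ->] := @param C b.
have G : forall i j, ((u / v) ^+ i = 1 /\ (u / v) ^+ j = 1) \/
                     ((u * v) ^+ i = 1 /\ (u * v) ^+ j = 1) ->
   (chebT C (gcdn i j)).[(u + u^-1)/2] = (chebT C (gcdn i j)).[(v + v^-1)/2].
  move=> i j H; apply/eq_cond => //.
  by case: H => [[h1 h2]|[h1 h2]]; [left|right]; apply: expr_gcd.
split.
  move=> /(@eq_cond C u v _ hu hv) [X1|Y1] /(@eq_cond C u v _ hu hv) [X2|Y2].
  - by left; apply: G; left.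
  - have [[H|H]|H] := @mixed C u v _ _ hu hv X1 Y2; last by right.
    + by left; apply/eq_cond => //; left.
    + by left; apply/eq_cond => //; right.
  - have [[H|H]|H] := @mixed C u v _ _ hu hv X2 Y1; last by right; rewrite mulnC.
    + by left; apply/eq_cond => //; left; rewrite gcdnC.
    + by left; apply/eq_cond => //; right; rewrite gcdnC.
  - by left; apply: G; right.
move=> /(@eq_cond C u v _ hu hv) [X1|Y1] /(@eq_cond C u v _ hu hv) [X2|Y2]
  /(@eq_cond C u v _ hu hv) [X3|Y3].
- by exists (@Ordinal 3 0 isT), (@Ordinal 3 1 isT); split => //=; apply: G; left.
- by exists (@Ordinal 3 0 isT), (@Ordinal 3 1 isT); split => //=; apply: G; left.
- by exists (@Ordinal 3 0 isT), (@Ordinal 3 2 isT); split => //=; apply: G; left.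
- by exists (@Ordinal 3 1 isT), (@Ordinal 3 2 isT); split => //=; apply: G; right.
- by exists (@Ordinal 3 1 isT), (@Ordinal 3 2 isT); split => //=; apply: G; left.
- by exists (@Ordinal 3 0 isT), (@Ordinal 3 2 isT); split => //=; apply: G; right.
- by exists (@Ordinal 3 0 isT), (@Ordinal 3 1 isT); split => //=; apply: G; right.
- by exists (@Ordinal 3 0 isT), (@Ordinal 3 1 isT); split => //=; apply: G; right.
Qed.
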